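(* Let $F$ be a field of characteristic $p > 0$. If $\phi \in F(z)$ is a rational function with no finite critical point, then there exist polynomials $f_1, f_2, g_1, g_2 \in F[z]$ such that \[ \phi(z) = \frac{f_1(z^p) + z f_2(z^p)}{g_1(z^p) + z g_2(z^p)}, \] and $f_2 g_1 - f_1 g_2$ is a nonzero constant function.
   Context: Finite critical points are taken over an algebraic closure $\overline{F}$: a point $x \in \overline F$ is a finite critical point of $\phi$ if, for a fractional linear transformation $\sigma$ over $\overline F$ with $\sigma(\phi(x)) \neq \infty$, $\frac{d(\sigma\circ\phi)}{dz}(x) = 0$. *)

(* Defs.v *)
From HB Require Import structures.
From mathcomp Require Import all_boot all_order all_algebra.
From mathcomp Require Import fraction.
Set Implicit Arguments. Unset Strict Implicit. Unset Printing Implicit Defensive.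
Import GRing.Theory.
Local Open Scope ring_scope.

Notation "x %:F" := (@FracField.tofrac _ x) : ring_scope.

Definition is_alg_closure (F : fieldType) (L : closedFieldType)
  (iota : {rmorphism F -> L}) : Prop :=
  forall x : L, exists q : {poly F}, q != 0 /\ root (map_poly iota q) x.

(* x in L is a finite critical point of phi in F(z) (viewed over L via iota):
   for some fractional linear transformation sigma(w) = (al w + be)/(ga w + de)
   (al de - be ga <> 0) with sigma(phi(x)) finite, i.e. sigma o phi = N/D with
   N, D in L[z] and D(x) <> 0, the derivative (N'D - ND')/D^2 of sigma o phi
   vanishes at x.  Here phi = a/b with a, b in F[z], b <> 0, and
   sigma o phi = (al a + be b)/(ga a + de b). *)
Definition finite_critical_point (F : fieldType) (L : closedFieldType)
  (iota : {rmorphism F -> L}) (phi : {fraction {poly F}}) (x : L) : Prop :=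
  exists a b : {poly F}, b != 0 /\ phi = (a%:F) / (b%:F) /\
  let a' := map_poly iota a in let b' := map_poly iota b in
  exists al be ga de : L, al * de - be * ga != 0 /\
  exists N D : {poly L}, D.[x] != 0 /\
    N * (ga *: a' + de *: b') = D * (al *: a' + be *: b') /\
    (N^`() * D - N * D^`()).[x] = 0.

(* Main.v *)
Require Import Defs.
From HB Require Import structures.
From mathcomp Require Import all_boot all_order all_algebra.
From mathcomp Require Import fraction generic_quotient ring.
Import GRing.Theory.
Local Open Scope ring_scope.

Local Open Scope quotient_scope.
Set Implicit Arguments.
Lemma frac_repr (R : idomainType) (phi : {fraction R}) :
  exists a b : R, b != 0 /\ phi = a%:F / b%:F.
Proof.
exists \n_(repr phi), \d_(repr phi).
split; first exact: denom_ratioP.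
rewrite -[phi in LHS]reprK.
set x := repr phi.
unlock FracField.tofrac.
have -> : (\pi_({fraction R}) x) = FracField.mul (\pi_({fraction R}) (Ratio \n_x 1)) (FracField.inv (\pi_({fraction R}) (Ratio \d_x 1))); last first.
reflexivity.
rewrite -FracField.pi_inv -FracField.pi_mul.
congr (\pi _).
rewrite /FracField.mulf /FracField.invf.
rewrite !numden_Ratio ?oner_eq0 ?denom_ratioP //.
rewrite mulr1 mul1r. by rewrite Ratio_numden.
Qed.
Lemma coef_zero (F : fieldType) (p : nat) (hp : p \in [pchar F]) (q : {poly F}) n :
  q^`()^`() = 0 -> ~~ (p %| n)%N -> ~~ (p %| n.-1)%N -> q`_n = 0.
Proof.
move=> h2 h1 h0.
have pr := pcharf_prime hp.
case: n h1 h0 => [|[|n]] h1 h0; first by rewrite dvdn0 in h1.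
  by rewrite dvdn0 in h0.
have := congr1 (fun r : {poly F} => r`_n) h2.
rewrite coef_deriv coef_deriv coef0 -mulrnA -mulr_natr => /eqP.
rewrite mulf_eq0 => /orP [/eqP //|].
rewrite -(dvdn_pcharf hp) Euclid_dvdM //.
by rewrite (negbTE h1) (negbTE h0).
Qed.

Lemma decomp (F : fieldType) (p : nat) (hp : p \in [pchar F]) (q : {poly F}) :
  q^`()^`() = 0 ->
  q = (\poly_(i < size q) q`_(i * p) \Po 'X^p)
      + 'X * (\poly_(i < size q) q`_(i * p).+1 \Po 'X^p).
Proof.
move=> h2.
have pr := pcharf_prime hp.
have p0 : (0 < p)%N by apply: prime_gt0.
have p1 : (1 < p)%N by apply: prime_gt1.
apply/polyP => n.
rewrite coefD coefXM !coef_comp_poly_Xn // !coef_poly.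
have hbig : forall k, (size q <= k)%N -> forall j, q`_(k * p + j) = 0.
  move=> k hk j; apply: nth_default; apply: (leq_trans hk).
  by rewrite (leq_trans (leq_pmulr _ p0)) // leq_addr.
case: (boolP (p %| n)%N) => hn.
  have hn1 : (n == 0%N) || ~~ (p %| n.-1)%N.
    case: n hn => [//|n] hn /=.
    apply/negP => hn1.
    have := dvdn_sub hn hn1; rewrite subSn // subnn.
    by rewrite dvdn1 => /eqP pe; rewrite pe in p1.
  rewrite (divnK hn).
  case: ifP => hs; last first.
    have -> : q`_n = 0.
      by rewrite -(divnK hn) -(addn0 (_ * p)%N) hbig // leqNgt hs.
    by rewrite add0r; case/orP: hn1 => [/eqP -> //|/negbTE ->]; case: ifP.
  by case/orP: hn1 => [->|/negbTE ->]; rewrite ?addr0 //; case: ifP; rewrite addr0.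
case: n hn => [|n] hn; first by rewrite dvdn0 in hn.
rewrite add0r /=.
case: (boolP (p %| n)%N) => hn1; last first.
  by rewrite (@coef_zero F p hp q n.+1 h2 hn hn1).
rewrite (divnK hn1).
case: ifP => hs //.
by rewrite -(divnK hn1) -addn1 hbig // leqNgt hs.
Qed.
Unset Implicit Arguments.
Local Close Scope quotient_scope.
Lemma no_root_W (F : fieldType) (L : closedFieldType) (iota : {rmorphism F -> L})
  (phi : {fraction {poly F}}) (a b : {poly F}) :
  coprimep a b -> b != 0 -> phi = a%:F / b%:F ->
  (forall x : L, ~ finite_critical_point iota phi x) ->
  exists2 c, c != 0 & a^`() * b - a * b^`() = c%:P.
Proof.
move=> cop bn0 hphi hcrit.
set W := a^`() * b - a * b^`().
have hW : forall x : L, (map_poly iota W).[x] != 0.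
  move=> x; apply/negP => /eqP Wx.
  have copm : coprimep (map_poly iota a) (map_poly iota b) by rewrite coprimep_map.
  case: (boolP ((map_poly iota b).[x] == 0)) => bx.
    have ax : (map_poly iota a).[x] != 0.
      by apply: (coprimep_root (q := map_poly iota a) _ bx); rewrite coprimep_sym.
    apply: (hcrit x); exists a, b; split => //; split => //=.
    exists 0, 1, 1, 0; split.
      by rewrite !mul0r mul1r sub0r oppr_eq0 oner_eq0.
    exists (map_poly iota b), (map_poly iota a); split => //.
    split; first by rewrite !scale0r !scale1r addr0 add0r mulrC.
    have -> : ((map_poly iota b)^`() * map_poly iota a -
      map_poly iota b * (map_poly iota a)^`()) = - map_poly iota W.
      rewrite /W rmorphB !rmorphM !deriv_map opprB.
      by rewrite [X in X - _]mulrC [X in _ - X]mulrC.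
    by rewrite hornerN Wx oppr0.
  apply: (hcrit x); exists a, b; split => //; split => //=.
  exists 1, 0, 0, 1; split.
    by rewrite !mul0r mul1r subr0 oner_eq0.
  exists (map_poly iota a), (map_poly iota b); split => //.
  split; first by rewrite !scale0r !scale1r addr0 add0r mulrC.
  by move: Wx; rewrite /W rmorphB !rmorphM !deriv_map.
have : size (map_poly iota W) == 1%N.
  apply/negPn/negP => /closed_rootP [x rx].
  by move: (hW x); rewrite -/(root _ x) rx.
by rewrite size_map_poly => /size_poly1P.
Qed.
Lemma dd_zero (F : fieldType) (a : {poly F}) : a %| a^`()^`() -> a^`()^`() = 0.
Proof.
move=> h; case: (eqVneq (a^`()^`()) 0) => // nz; exfalso.
have an : a^`() != 0 by apply/eqP => e; move: nz; rewrite e deriv0 eqxx.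
have a0 : a != 0 by apply/eqP => e; move: an; rewrite e deriv0 eqxx.
have := dvdp_leq nz h.
have := lt_size_deriv an; have := lt_size_deriv a0.
move=> h1 h2 h3; have := leq_trans h3 (ltnW h2).
by rewrite leqNgt h1.
Qed.

Lemma second_deriv (F : fieldType) (a b : {poly F}) c :
  coprimep a b -> a^`() * b - a * b^`() = c%:P ->
  a^`()^`() = 0 /\ b^`()^`() = 0.
Proof.
move=> cop hW.
have := congr1 (fun r : {poly F} => r^`()) hW.
rewrite derivC derivB !derivM => /eqP.
rewrite subr_eq0 => /eqP e.
have e2 : a^`()^`() * b = a * b^`()^`().
  apply: (addIr (a^`() * b^`())).
  by rewrite e addrC.
split; apply: dd_zero.
  by rewrite -(Gauss_dvdpl _ cop) e2 dvdp_mulr.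
have cop' : coprimep b a by rewrite coprimep_sym.
by rewrite -(Gauss_dvdpr _ cop') -e2 dvdp_mull.
Qed.
Lemma deriv_compXp (F : fieldType) (p : nat) (hp : p \in [pchar F]) (f : {poly F}) :
  (f \Po 'X^p)^`() = 0.
Proof.
by rewrite deriv_comp derivXn -mulr_natr -polyC_natr (pcharf0 hp) mulr0 mulr0.
Qed.

Lemma wronsk (F : fieldType) (p : nat) (hp : p \in [pchar F]) (f1 f2 g1 g2 : {poly F}) :
  let A := (f1 \Po 'X^p) + 'X * (f2 \Po 'X^p) in
  let B := (g1 \Po 'X^p) + 'X * (g2 \Po 'X^p) in
  A^`() * B - A * B^`() = (f2 * g1 - f1 * g2) \Po 'X^p.
Proof.
move=> A B.
have dA : A^`() = f2 \Po 'X^p by rewrite /A derivD derivM !(deriv_compXp _ _ hp) derivX mulr0 addr0 add0r mul1r.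
have dB : B^`() = g2 \Po 'X^p by rewrite /B derivD derivM !(deriv_compXp _ _ hp) derivX mulr0 addr0 add0r mul1r.
rewrite dA dB /A /B comp_polyB !comp_polyM.
ring.
Qed.

Lemma comp_const (F : fieldType) (p : nat) (p0 : (0 < p)%N) (h : {poly F}) c :
  h \Po 'X^p = c%:P -> h = c%:P.
Proof.
move=> e; apply/polyP => i.
have := congr1 (fun r : {poly F} => r`_(i * p)) e.
rewrite /= coef_comp_poly_Xn // dvdn_mull // mulnK // !coefC muln_eq0.
by rewrite (negbTE (lt0n_neq0 p0)) orbF.
Qed.

Theorem lemma3p1 (F : fieldType) (p : nat) (hp : p \in [pchar F])
  (L : closedFieldType) (iota : {rmorphism F -> L})
  (hL : is_alg_closure iota)
  (phi : {fraction {poly F}})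
  (hcrit : forall x : L, ~ finite_critical_point iota phi x) :
  exists f1 f2 g1 g2 : {poly F},
    phi = ((f1 \Po 'X^p) + 'X * (f2 \Po 'X^p))%:F
          / ((g1 \Po 'X^p) + 'X * (g2 \Po 'X^p))%:F
    /\ exists c : F, c != 0 /\ f2 * g1 - f1 * g2 = c%:P.
Proof.
have pr := pcharf_prime hp.
have p0 := prime_gt0 pr.
have [a [b [bn0 hab]]] := frac_repr phi.
have gn0 : gcdp a b != 0 by rewrite gcdp_eq0 negb_and bn0 orbT.
have cop : coprimep (a %/ gcdp a b) (b %/ gcdp a b).
  by apply: coprimep_div_gcd; rewrite bn0 orbT.
have ea : a = (a %/ gcdp a b) * gcdp a b by rewrite divpK // dvdp_gcdl.
have eb : b = (b %/ gcdp a b) * gcdp a b by rewrite divpK // dvdp_gcdr.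
move: cop ea eb; set g := gcdp a b; set a0 := a %/ g; set b0 := b %/ g.
move=> cop ea eb.
have b0n0 : b0 != 0 by apply/eqP => e; move: bn0; rewrite eb e mul0r eqxx.
have hphi : phi = a0%:F / b0%:F.
  by rewrite hab ea eb !tofracM invfM mulrACA divff ?mulr1 // tofrac_eq0.
have [c cn0 hW] := @no_root_W F L iota phi a0 b0 cop b0n0 hphi hcrit.
have [ha hb] := @second_deriv F a0 b0 c cop hW.
move: hphi hW; rewrite (@decomp F p hp a0 ha) (@decomp F p hp b0 hb) => hphi hW.
eexists _, _, _, _; split; first exact: hphi.
exists c; split => //.
apply: (comp_const F p p0).
by move: (wronsk _ _ hp (\poly_(i < size a0) a0`_(i * p)) (\poly_(i < size a0) a0`_(i * p).+1) (\poly_(i < size b0) b0`_(i * p)) (\poly_(i < size b0) b0`_(i * p).+1)) => /= <-.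
Qed.
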